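(* Let $\mathcal G=(I,O,\lambda)$ be a synchronous game and let $p(a,b|v,w)=\langle h_{v,a},k_{w,b}\rangle$ be a perfect vect-strategy for $\mathcal G$, with vectors $h_{v,a},k_{w,b}$ as in the definition of a vector correlation. Then $h_{v,a}=k_{v,a}$ for all $v\in I$, $a\in O$.
   Context: A synchronous game $\mathcal G=(I,O,\lambda)$ consists of finite sets $I,O$ and $\lambda:I\times I\times O\times O\to\{0,1\}$ with $\lambda(v,v,a,b)=1$ if $a=b$ and $0$ if $a\ne b$. A strategy $p(a,b|v,w)$ is perfect if $\lambda(v,w,a,b)=0\Rightarrow p(a,b|v,w)=0$. A vector correlation (vect-strategy) is one of the form $p(a,b|v,w)=\langle h_{v,a},k_{w,b}\rangle$ where $h_{v,a},k_{w,b}$ ($v,w\in I$, $a,b\in O$) are vectors in a Hilbert space such that for each $v$ the vectors $\{h_{v,a}\}_{a\in O}$ are mutually orthogonal and the vectors $\{k_{v,b}\}_{b\in O}$ are mutually orthogonal, there is a unit vector $\eta$ with $\sum_ah_{v,a}=\eta=\sum_bk_{w,b}$ for all $v,w$, and $\langle h_{v,a},k_{w,b}\rangle\ge0$ for all $v,w,a,b$. *)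

(* Defs.v *)
From mathcomp Require Import all_boot all_order all_algebra.
From mathcomp Require Import complex.
From mathcomp Require Import reals.
Set Implicit Arguments. Unset Strict Implicit. Unset Printing Implicit Defensive.
Import Order.TTheory GRing.Theory Num.Theory.
Local Open Scope ring_scope.

Definition is_inner_product (C : numClosedFieldType) (V : lmodType C)
  (ip : V -> V -> C) : Prop :=
  [/\ (forall (c : C) (x y z : V), ip (c *: x + y) z = c * ip x z + ip y z),
      (forall x y : V, ip x y = (ip y x)^*),
      (forall x : V, 0 <= ip x x)
    & (forall x : V, ip x x = 0 -> x = 0)].

Definition synchronous (I O : finType) (lambda : I -> I -> O -> O -> bool) : Prop :=
  forall (v : I) (a b : O), lambda v v a b = (a == b).

Definition vect_correlation (C : numClosedFieldType) (V : lmodType C)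
  (ip : V -> V -> C) (I O : finType) (h k : I -> O -> V) : Prop :=
  [/\ (forall (v : I) (a b : O), a != b -> ip (h v a) (h v b) = 0),
      (forall (v : I) (a b : O), a != b -> ip (k v a) (k v b) = 0),
      (exists eta : V, ip eta eta = 1 /\
         forall v : I, \sum_(a : O) h v a = eta /\ \sum_(b : O) k v b = eta)
    & (forall (v w : I) (a b : O), 0 <= ip (h v a) (k w b))].

Definition perfect_vect (C : numClosedFieldType) (V : lmodType C)
  (ip : V -> V -> C) (I O : finType) (lambda : I -> I -> O -> O -> bool)
  (h k : I -> O -> V) : Prop :=
  forall (v w : I) (a b : O), lambda v w a b = false -> ip (h v a) (k w b) = 0.

(* Main.v *)
Require Import Defs.
From mathcomp Require Import all_boot all_order all_algebra.
From mathcomp Require Import complex.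
From mathcomp Require Import reals.
Import Order.TTheory GRing.Theory Num.Theory.
Local Open Scope ring_scope.

Theorem mainTheorem9 (R : realType) (V : lmodType R[i]) (ip : V -> V -> R[i])
  (I O : finType) (lambda : I -> I -> O -> O -> bool) (h k : I -> O -> V) :
  is_inner_product ip ->
  synchronous lambda ->
  vect_correlation ip h k ->
  perfect_vect ip lambda h k ->
  forall (v : I) (a : O), h v a = k v a.
Proof.
move=> [lin csym pos def] sync [oh ok [eta [_ Heta]] _] perf v a.
have ipD : forall z x y, ip (x + y) z = ip x z + ip y z.
  by move=> z x y; have := lin 1 x y z; rewrite scale1r mul1r.
have ip0 : forall z, ip 0 z = 0.
  move=> z; have := ipD z 0 0; rewrite addr0 => H.
  by apply: (addrI (ip 0 z)); rewrite addr0 -H.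
have ipN : forall z x, ip (- x) z = - ip x z.
  move=> z x; have := lin (-1) x 0 z; rewrite addr0 ip0 addr0 scaleN1r.
  by rewrite mulN1r.
have ipB : forall z x y, ip (x - y) z = ip x z - ip y z.
  by move=> z x y; rewrite ipD ipN.
have ipS : forall z (f : O -> V), ip (\sum_b f b) z = \sum_b ip (f b) z.
  move=> z f; exact: (big_morph (fun x => ip x z) (ipD z) (ip0 z)).
have perf' : forall b, b != a -> ip (h v b) (k v a) = 0.
  by move=> b nb; apply: perf; rewrite sync (negbTE nb).
have perf'' : forall b, b != a -> ip (h v a) (k v b) = 0.
  by move=> b nb; apply: perf; rewrite sync eq_sym (negbTE nb).
have [Hh Hk] := Heta v.
have E1 : ip eta (h v a) = ip (h v a) (h v a).
  rewrite -Hh ipS (bigD1 a) //= big1 ?addr0 // => b nb; exact: oh.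
have E2 : ip eta (h v a) = ip (k v a) (h v a).
  rewrite -Hk ipS (bigD1 a) //= big1 ?addr0 // => b nb.
  by rewrite csym perf'' ?conjC0.
have E3 : ip eta (k v a) = ip (h v a) (k v a).
  rewrite -Hh ipS (bigD1 a) //= big1 ?addr0 // => b nb; exact: perf'.
have E4 : ip eta (k v a) = ip (k v a) (k v a).
  rewrite -Hk ipS (bigD1 a) //= big1 ?addr0 // => b nb; exact: ok.
set d := h v a - k v a.
have Ek : ip (k v a) (h v a) = ip (h v a) (h v a) by rewrite -E1 E2.
have Dh : ip d (h v a) = 0 by rewrite ipB -Ek subrr.
have Dk : ip d (k v a) = 0 by rewrite ipB -E3 E4 subrr.
have Dd : ip d d = 0.
  rewrite {2}/d ipB.
  by rewrite csym Dh (csym (k v a)) Dk conjC0 subrr.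
by apply/eqP; rewrite -subr_eq0; apply/eqP; apply: def.
Qed.
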